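(* For every integer $s\ge1$, $$\sum_{n=1}^{s}\frac{E_{2n}}{2^{2n}}\,t(2s,2n)=t(2s+1,1)=\frac{(2s)!}{2^{2s}}\binom{-1/2}{s}=(-1)^s\Big(\frac{1\cdot3\cdots(2s-1)}{2^s}\Big)^2 .$$ Equivalently, $\operatorname{sech}(D/2)\,0^{[2s]}=D\,0^{[2s+1]}$.
   Context: $E_{2n}$ are the Euler numbers: $\operatorname{sech}x=\sum_{n\ge0}E_{2n}x^{2n}/(2n)!$. Central factorials: $x^{[0]}=1$, $x^{[n]}=x\prod_{j=1}^{n-1}(x+\tfrac n2-j)$ for $n\ge1$; $t(n,k)$ is defined by $x^{[n]}=\sum_k t(n,k)x^k$. For a power series $h(D)=\sum_k h_kD^k$, $h(D)\,0^{[n]}:=\sum_k h_k\,k!\,t(n,k)$. *)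

(* Defs.v *)
From HB Require Import structures.
From mathcomp Require Import all_boot all_order all_algebra.
Set Implicit Arguments. Unset Strict Implicit. Unset Printing Implicit Defensive.
Import Order.TTheory GRing.Theory Num.Theory.
Local Open Scope ring_scope.

(* Euler numbers E_{2n}, sech x = sum_n E_{2n} x^{2n}/(2n)!.  Since
   cosh x * sech x = 1, comparing coefficients of x^{2n} gives
   E_0 = 1 and sum_{k=0}^{n} C(2n,2k) E_{2k} = 0 for n >= 1.
   euler_seq n = [:: E_0; E_2; ...; E_{2n}]. *)
Fixpoint euler_seq (n : nat) : seq rat :=
  match n with
  | 0%N => [:: 1]
  | m.+1 => let s := euler_seq m in
            rcons s (- \sum_(k < m.+1) ('C(2 * m.+1, 2 * k))%:R * s`_k)
  end.

Definition euler2 (n : nat) : rat := (euler_seq n)`_n.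

Definition cfact (n : nat) : {poly rat} :=
  if n is 0%N then 1
  else 'X * \prod_(1 <= j < n) ('X + (n%:R / 2 - j%:R)%:P).

Definition tcf (n k : nat) : rat := (cfact n)`_k.

Definition gbinom (a : rat) (s : nat) : rat :=
  (\prod_(i < s) (a - i%:R)) / (s`!)%:R.

(* Main.v *)
Require Import Defs.
From HB Require Import structures.
From mathcomp Require Import all_boot all_order all_algebra.
From mathcomp Require Import ring.
Import Order.TTheory GRing.Theory Num.Theory.
Local Open Scope ring_scope.

Lemma euler_seq_nth m k : (k <= m)%N -> (euler_seq m)`_k = euler2 k.
Proof.
elim: m k => [|m IH] k hk; first by case: k hk.
have sz : forall n, size (euler_seq n) = n.+1.
  by elim=> [|n IHn] //=; rewrite size_rcons IHn.
rewrite leq_eqVlt in hk; case/orP: hk => [/eqP->|hk]; first by [].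
by rewrite /= nth_rcons sz hk IH.
Qed.

Lemma euler_sum m : \sum_(n < m.+1) ('C(2 * m, 2 * n))%:R * euler2 n = (m == 0)%:R.
Proof.
case: m => [|m]; first by rewrite big_ord1 /= bin0 mul1r.
rewrite big_ord_recr /= binn mul1r.
have -> : euler2 m.+1 = - \sum_(k < m.+1) ('C(2 * m.+1, 2 * k))%:R * euler2 k.
  rewrite /euler2 /= nth_rcons.
  have sz : forall n, size (euler_seq n) = n.+1.
    by elim=> [|n IHn] //=; rewrite size_rcons IHn.
  rewrite sz ltnn eqxx; congr (- _); apply: eq_bigr => k _.
  by rewrite euler_seq_nth // -ltnS.
by rewrite addrN.
Qed.

Lemma coefXaddC (c : rat) i k : (('X + c%:P) ^+ i)`_k = ('C(i, k))%:R * c ^+ (i - k).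
Proof.
elim: i k => [|i IH] k.
  by rewrite expr0 coefC; case: k => [|k] //=; rewrite bin0 mul1r.
rewrite exprS mulrDl coefD coefXM coefCM IH.
case: k => [|k] /=; first by rewrite IH !bin0 !mul1r subn0 add0r exprS.
rewrite binS natrD mulrDl IH subSS addrC; congr (_ + _).
case: (ltnP k i) => hki.
  by rewrite mulrCA -exprS subnSK.
by rewrite bin_small ?ltnS // !mul0r mulr0.
Qed.

Definition hh : rat := 2^-1.
Definition Mop (p : {poly rat}) : {poly rat} :=
  hh *: ((p \Po ('X + hh%:P)) + (p \Po ('X - hh%:P))).

Lemma Mop_Xn_coef i k :
  (Mop 'X^i)`_k = hh * ('C(i, k)%:R * (hh ^+ (i - k) + (- hh) ^+ (i - k))).
Proof.
by rewrite /Mop coefZ !comp_Xn_poly coefD -polyCN !coefXaddC -mulrDr.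
Qed.

Lemma Lf_Xn N i : (i < 2 * N)%N ->
  \sum_(n < N) euler2 n / 2 ^+ (2 * n) * (Mop 'X^i)`_(2 * n) = (i == 0%N)%:R.
Proof.
move=> hi.
have [oi|ei] := boolP (odd i).
  rewrite big1; first by case: i oi hi.
  move=> n _; rewrite Mop_Xn_coef.
  case: (leqP (2 * n) i) => h2.
    rewrite exprNn -signr_odd oddB // oi oddM /= expr1 mulN1r addrN.
    by rewrite !mulr0.
  by rewrite bin_small // !mul0r !mulr0.
move: (odd_double_half i); rewrite (negbTE ei) add0n -mul2n => ei2.
set m := i./2 in ei2.
have hm : (m < N)%N by rewrite -(ltn_pmul2l (isT : (0 < 2)%N)) ei2.
rewrite -ei2.
transitivity (\sum_(n < N) (if (n < m.+1)%N then
   ('C(2 * m, 2 * n))%:R * euler2 n / 2 ^+ (2 * m) else 0)).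
  apply: eq_bigr => n _; rewrite Mop_Xn_coef.
  case: (ltnP n m.+1) => hn.
    rewrite ltnS in hn.
    have e : (2 * m - 2 * n = 2 * (m - n))%N by rewrite mulnBr.
    have e2 : (2 * m = 2 * n + 2 * (m - n))%N by rewrite -mulnDr subnKC.
    rewrite e exprNn -signr_odd oddM /= expr0 mul1r.
    have ex : (2:rat) ^+ (2 * m) = 2 ^+ (2 * n) * 2 ^+ (2 * (m - n)).
      by rewrite -exprD -e2.
    rewrite ex /hh exprVn.
    have a0 : (2 ^+ (2 * n) : rat) != 0 by rewrite expf_neq0.
    have b0 : (2 ^+ (2 * (m - n)) : rat) != 0 by rewrite expf_neq0.
    move: a0 b0; set a := 2 ^+ (2 * n); set b := 2 ^+ (2 * (m - n)).
    set c := _%:R; set E := euler2 n => a0 b0.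
    field. by rewrite a0 b0.
  by rewrite bin_small ?ltn_pmul2l // !mul0r !mulr0.
rewrite -big_mkcond /= -(big_ord_widen _ (fun n => ('C(2 * m, 2 * n))%:R * euler2 n / 2 ^+ (2 * m))) //.
rewrite -mulr_suml euler_sum.
by case: m {ei2 hm} => [|m] /=; rewrite ?mul1r ?mul0r // expr0 invr1.
Qed.

Lemma MopD p q : Mop (p + q) = Mop p + Mop q.
Proof. by rewrite /Mop !comp_polyD -scalerDr addrACA. Qed.
Lemma Mop0 : Mop 0 = 0.
Proof. by rewrite /Mop !comp_poly0 addr0 scaler0. Qed.
Lemma MopZ c p : Mop (c *: p) = c *: Mop p.
Proof. by rewrite /Mop !comp_polyZ -scalerDr !scalerA mulrC. Qed.

Lemma Lf_Mop N (p : {poly rat}) : (size p <= 2 * N)%N ->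
  \sum_(n < N) euler2 n / 2 ^+ (2 * n) * (Mop p)`_(2 * n) = p`_0.
Proof.
move=> hs.
have lin k : (Mop p)`_k = \sum_(i < size p) p`_i * (Mop 'X^i)`_k.
  rewrite -[p in Mop p]coefK poly_def (big_morph Mop MopD Mop0) coef_sum.
  by apply: eq_bigr => i _; rewrite MopZ coefZ.
under eq_bigr => n _ do rewrite lin mulr_sumr.
rewrite exchange_big /=.
under eq_bigr => i _ do (under eq_bigr => n _ do rewrite mulrCA; rewrite -mulr_sumr Lf_Xn; [| exact: leq_trans (ltn_ord i) hs]).
case sp: (size p) => [|k].
  by rewrite big_ord0 nth_default // sp.
rewrite big_ord_recl /= mulr1 big1 ?addr0 // => i _.
by rewrite mulr0.
Qed.

Definition PP s : {poly rat} :=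
  \prod_(1 <= j < (2 * s).+1) ('X + (((2 * s).+1)%:R / 2 - j%:R)%:P).
Definition QQ s : {poly rat} :=
  \prod_(1 <= j < 2 * s) ('X + (s%:R - j%:R)%:P).

Lemma cfact_odd s : cfact (2 * s).+1 = 'X * PP s.
Proof. by []. Qed.

Lemma cfact_even s : (1 <= s)%N -> cfact (2 * s) = 'X * QQ s.
Proof.
move=> hs; rewrite /cfact /QQ.
have : (2 * s)%N <> 0%N by case: s hs.
case e: (2 * s)%N => [|n] // _; congr (_ * _).
apply: eq_bigr => j _; congr ('X + (_ - _)%:P).
rewrite -e natrM; by field.
Qed.

Lemma comp_XaddC (c d : rat) : ('X + c%:P) \Po ('X + d%:P) = 'X + (d + c)%:P.
Proof. by rewrite comp_polyD comp_polyX comp_polyC polyCD addrA. Qed.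

Lemma oddR s : ((2 * s).+1)%:R = 2 * s%:R + 1 :> rat.
Proof. by rewrite -natr1 natrM. Qed.

Lemma MopP s : (1 <= s)%N -> Mop (PP s) = 'X * QQ s.
Proof.
move=> hs.
have E1 : PP s \Po ('X + hh%:P) = ('X + s%:R%:P) * QQ s.
  rewrite /PP rmorph_prod big_nat_recl; last by rewrite muln_gt0.
  congr (_ * _).
    rewrite /= comp_XaddC; congr ('X + _%:P); rewrite /hh oddR; by field.
  apply: eq_bigr => j _; rewrite /= comp_XaddC; congr ('X + _%:P).
  rewrite /hh oddR -(natr1 j); by field.
have E2 : PP s \Po ('X - hh%:P) = QQ s * ('X - s%:R%:P).
  rewrite /PP rmorph_prod big_nat_recr /=; last by rewrite muln_gt0.
  congr (_ * _).
    apply: eq_bigr => j _; rewrite /= -polyCN comp_XaddC; congr ('X + _%:P).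
    rewrite /hh oddR; by field.
  rewrite /= -!polyCN comp_XaddC; congr ('X + _%:P).
  rewrite /hh oddR; by field.
rewrite /Mop E1 E2.
have -> : ('X + s%:R%:P) * QQ s + QQ s * ('X - s%:R%:P) = ('X * QQ s) *+ 2.
  by rewrite mulrDl mulrBr [QQ s * 'X]mulrC mulr2n addrACA [_%:P * _]mulrC addrN addr0.
have h2 : hh + hh = 1 by rewrite /hh; field.
by rewrite mulr2n scalerDr -scalerDl h2 scale1r.
Qed.

Definition BB s : rat := \prod_(i < s) ((2 * i + 1)%:R : rat).

Lemma prodH s : \prod_(i < s) ((2 * i + 1)%:R / 2 : rat) = BB s / 2 ^+ s.
Proof.
rewrite big_split /= /BB; congr (_ * _).
by rewrite prodr_const card_ord exprVn.
Qed.

Lemma prodNH s : \prod_(i < s) (- ((2 * i + 1)%:R / 2) : rat) = (-1) ^+ s * (BB s / 2 ^+ s).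
Proof.
rewrite -prodH.
under eq_bigr => i _ do rewrite -mulN1r.
by rewrite big_split /= prodr_const card_ord.
Qed.

Lemma gb_prod s : \prod_(i < s) (- (1 / 2) - i%:R : rat) = (-1) ^+ s * (BB s / 2 ^+ s).
Proof.
rewrite -prodNH; apply: eq_bigr => i _.
rewrite natrD natrM; by field.
Qed.

Lemma P0 s : (PP s)`_0 = (-1) ^+ s * (BB s / 2 ^+ s) ^+ 2.
Proof.
rewrite /PP coef0_prod.
under eq_bigr => j _ do rewrite coefD coefX add0r coefC /=.
rewrite (big_cat_nat _ (n := s.+1)) //=; last by rewrite ltnS leq_pmull.
rewrite -{2}[s.+1]add0n big_addn.
have -> : ((2 * s).+1 - s.+1 = s)%N by rewrite subSS mul2n -addnn addnK.
rewrite big_add1 /= big_nat_rev /= !big_mkord.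
rewrite expr2 (mulrA ((-1) ^+ s)) -prodNH -prodH mulrC; congr (_ * _).
  apply: eq_bigr => i _; rewrite oddR addnS -(natr1 (i + s)) !natrD. by field.
apply: eq_bigr => i _; rewrite oddR add0n.
have hi : (i < s)%N by [].
rewrite -(natr1 (s - i.+1)) natrB; last by [].
rewrite natrD natrM -natr1; by field.
Qed.

Lemma fact2 s : ((2 * s)`!)%:R = (s`!)%:R * 2 ^+ s * BB s :> rat.
Proof.
elim: s => [|s IH]; first by rewrite /BB big_ord0 !fact0 mulr1 expr0 mulr1.
have -> : (2 * s.+1 = (2 * s).+2)%N by rewrite mulnS.
rewrite !factS /BB big_ord_recr /= -/(BB s) !natrM IH exprS.
rewrite -!natr1 natrM natrD natrM; by field.
Qed.

Lemma sizePP s : size (PP s) = (2 * s).+1.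
Proof.
rewrite /PP.
under eq_bigr => j _ do rewrite -[_%:P]opprK -polyCN.
by rewrite size_prod_XsubC size_iota subn1.
Qed.

Theorem mainTheorem6 (s : nat) (hs : (1 <= s)%N) :
  \sum_(1 <= n < s.+1) euler2 n / 2 ^+ (2 * n) * tcf (2 * s) (2 * n)
    = tcf (2 * s).+1 1
  /\ tcf (2 * s).+1 1 = ((2 * s)`!)%:R / 2 ^+ (2 * s) * gbinom (- (1 / 2)) s
  /\ ((2 * s)`!)%:R / 2 ^+ (2 * s) * gbinom (- (1 / 2)) s
       = (-1) ^+ s * ((\prod_(i < s) (2 * i + 1)%:R) / 2 ^+ s) ^+ 2.
Proof.
have T1 : tcf (2 * s).+1 1 = (-1) ^+ s * (BB s / 2 ^+ s) ^+ 2.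
  by rewrite /tcf cfact_odd coefXM /= P0.
have T3 : ((2 * s)`!)%:R / 2 ^+ (2 * s) * gbinom (- (1 / 2)) s
       = (-1) ^+ s * (BB s / 2 ^+ s) ^+ 2.
  rewrite /gbinom gb_prod fact2.
  have f0 : ((s`!)%:R : rat) != 0 by rewrite pnatr_eq0 -lt0n fact_gt0.
  have t0 : (2 ^+ s : rat) != 0 by rewrite expf_neq0.
  rewrite mulnC exprM.
  move: f0 t0; set F := (s`!)%:R; set T := 2 ^+ s; set B := BB s => f0 t0.
  set S := (-1) ^+ s; by field; rewrite f0 t0.
split; last by split; [rewrite T1 T3 | exact: T3].
rewrite /tcf cfact_odd coefXM /=.
have := Lf_Mop (s.+1) (PP s); rewrite sizePP mulnS ltnW // => /(_ isT).
rewrite MopP // -cfact_even //.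
rewrite big_ord_recl /= muln0 /tcf.
have -> : (cfact (2 * s))`_0 = 0 by rewrite cfact_even // coefXM.
rewrite mulr0 add0r => <-.
rewrite big_add1 /= big_mkord; apply: eq_bigr => i _.
by rewrite /bump leq0n add1n.
Qed.
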